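(* Let $t$ and $\tau$ be normal terms, $y$ a $\lambda$-variable with $y\notin Fv(t)$ and $(t\;y)\triangleright^*\tau$, let $A,B$ be types, and suppose $\Gamma,y:A\vdash\tau:B;\Delta$. Then $\Gamma\vdash t:A\to B;\Delta$.
   Context: $\lambda\mu$-terms: $t::= x\mid \lambda x.t\mid (t\;t)\mid \mu a.t\mid (a\;t)$ over disjoint infinite sets of $\lambda$-variables and $\mu$-variables; $Fv(t)$ denotes free variables; types built from propositional variables and $\perp$ with $\to$. Reduction $(\lambda x.u\;v)\triangleright u[x:=v]$, $(\mu a.u\;v)\triangleright\mu a.u[a:=^*v]$ ($u[a:=^*v]$ replaces each subterm $(a\;w)$ of $u$ by $(a\;(w\;v))$), $\triangleright^*$ its reflexive transitive compatible closure; normal = no redex. Typing rules for $\Gamma\vdash t:A;\Delta$ ($\Gamma$ declarations of $\lambda$-variables, $\Delta$ of $\mu$-variables): (ax) $\Gamma\vdash x:A;\Delta$ if $x:A\in\Gamma$; ($\to_i$) from $\Gamma,x:A\vdash t:B;\Delta$ infer $\Gamma\vdash\lambda x.t:A\to B;\Delta$; ($\to_e$) from $\Gamma\vdash u:A\to B;\Delta$, $\Gamma\vdash v:A;\Delta$ infer $\Gamma\vdash(u\;v):B;\Delta$; ($\mu$) from $\Gamma\vdash t:\perp;\Delta,a:A$ infer $\Gamma\vdash\mu a.t:A;\Delta$; ($\perp$) from $\Gamma\vdash t:A;\Delta,a:A$ infer $\Gamma\vdash(a\;t):\perp;\Delta,a:A$. *)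

(* Defs.v *)
(* Lambda-mu calculus (Parigot) in pure de Bruijn style,
   with two independent index spaces: lambda-variables (Var n, bound by Lam)
   and mu-variables (Named a t, bound by Mu). Terms are thus taken up to
   alpha-conversion. *)
From Stdlib Require Import List Relations.

Inductive ty : Type :=
| TVar : nat -> ty
| Bot : ty
| Arr : ty -> ty -> ty.

Inductive term : Type :=
| Var : nat -> term
| Lam : term -> term
| App : term -> term -> term
| Mu : term -> term
| Named : nat -> term -> term.

Fixpoint lift_l (k : nat) (t : term) : term :=
  match t with
  | Var n => if Nat.leb k n then Var (S n) else Var n
  | Lam u => Lam (lift_l (S k) u)
  | App u v => App (lift_l k u) (lift_l k v)
  | Mu u => Mu (lift_l k u)
  | Named a u => Named a (lift_l k u)
  end.

Fixpoint lift_m (k : nat) (t : term) : term :=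
  match t with
  | Var n => Var n
  | Lam u => Lam (lift_m k u)
  | App u v => App (lift_m k u) (lift_m k v)
  | Mu u => Mu (lift_m (S k) u)
  | Named a u => Named (if Nat.leb k a then S a else a) (lift_m k u)
  end.

(* u[x_k := v], removing the binder of index k (free indices above k decrease) *)
Fixpoint subst_l (k : nat) (v : term) (t : term) : term :=
  match t with
  | Var n => if Nat.eqb n k then v
             else if Nat.ltb k n then Var (pred n) else Var n
  | Lam u => Lam (subst_l (S k) (lift_l 0 v) u)
  | App u w => App (subst_l k v u) (subst_l k v w)
  | Mu u => Mu (subst_l k (lift_m 0 v) u)
  | Named a u => Named a (subst_l k v u)
  end.

(* u[a_k :=* v] : replace every subterm (a_k w) by (a_k (w v)) *)
Fixpoint subst_m (k : nat) (v : term) (t : term) : term :=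
  match t with
  | Var n => Var n
  | Lam u => Lam (subst_m k (lift_l 0 v) u)
  | App u w => App (subst_m k v u) (subst_m k v w)
  | Mu u => Mu (subst_m (S k) (lift_m 0 v) u)
  | Named a u =>
      if Nat.eqb a k then Named a (App (subst_m k v u) v)
      else Named a (subst_m k v u)
  end.

Inductive step : term -> term -> Prop :=
| step_beta : forall u v, step (App (Lam u) v) (subst_l 0 v u)
| step_mu : forall u v, step (App (Mu u) v) (Mu (subst_m 0 (lift_m 0 v) u))
| step_lam : forall u u', step u u' -> step (Lam u) (Lam u')
| step_appl : forall u u' v, step u u' -> step (App u v) (App u' v)
| step_appr : forall u v v', step v v' -> step (App u v) (App u v')
| step_mu_ctx : forall u u', step u u' -> step (Mu u) (Mu u')
| step_named : forall a u u', step u u' -> step (Named a u) (Named a u').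

Definition red : term -> term -> Prop := clos_refl_trans term step.

Fixpoint normal (t : term) : Prop :=
  match t with
  | Var _ => True
  | Lam u => normal u
  | App u v =>
      match u with
      | Lam _ => False
      | Mu _ => False
      | _ => normal u /\ normal v
      end
  | Mu u => normal u
  | Named _ u => normal u
  end.

(* G (resp. D) lists the types of the
   lambda- (resp. mu-) variables by de Bruijn index; extending a context
   with a fresh variable is consing (the new variable gets index 0). *)
Inductive typ : list ty -> list ty -> term -> ty -> Prop :=
| typ_ax : forall G D n A, nth_error G n = Some A -> typ G D (Var n) A
| typ_lam : forall G D t A B, typ (A :: G) D t B -> typ G D (Lam t) (Arr A B)
| typ_app : forall G D u v A B,
    typ G D u (Arr A B) -> typ G D v A -> typ G D (App u v) B
| typ_mu : forall G D t A, typ G (A :: D) t Bot -> typ G D (Mu t) A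
| typ_named : forall G D a t A,
    nth_error D a = Some A -> typ G D t A -> typ G D (Named a t) Bot.

(* Main.v *)
Require Import Defs.
From Stdlib Require Import List Relations Lia Arith.
Import ListNotations.

Fixpoint neutral (t : term) : Prop :=
  match t with
  | Var _ => True | Named _ _ => True | App u _ => neutral u | _ => False
  end.

Fixpoint VAn (n : nat) (t : term) : Prop :=
  match t with
  | Var _ => True
  | Lam u => VAn (S n) u
  | App u v => VAn n u /\ VAn n v /\ ((exists j, v = Var j /\ j < n) \/ neutral u)
  | Mu u => VAn n u
  | Named _ u => VAn n u
  end.

Lemma normal_neutral : forall u, normal u ->
  match u with Lam _ | Mu _ => True | _ => neutral u end.
Proof.
  induction u; simpl; intros H; auto.
  destruct u1; simpl in *; try contradiction; destruct H as [H1 H2];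
  apply IHu1 in H1; exact H1.
Qed.

Lemma normal_VAn : forall t n, normal t -> VAn n t.
Proof.
  induction t; simpl; intros m H; auto.
  assert (Hn := normal_neutral (App t1 t2) H). simpl in Hn.
  assert (H' := H).
  destruct t1; simpl in H'; try contradiction; destruct H' as [H1 H2];
  (split; [apply IHt1; exact H1|split; [apply IHt2; exact H2|right; exact Hn]]).
Qed.

Lemma normal_lift : forall t k, normal t -> normal (lift_l k t).
Proof.
  induction t; simpl; intros k H; auto.
  - destruct (Nat.leb k n); simpl; auto.
  - destruct t1; simpl in *; try contradiction; destruct H as [H1 H2];
    simpl in *; try (destruct (Nat.leb k n)); simpl; split; auto;
    apply (IHt1 k) in H1; simpl in H1; auto.
Qed.

Lemma neutral_subst_l : forall u k j, neutral u -> neutral (subst_l k (Var j) u).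
Proof.
  induction u; simpl; intros k j H; auto.
  destruct (Nat.eqb n k); [|destruct (Nat.ltb k n)]; simpl; auto.
Qed.

Lemma neutral_subst_m : forall u k v, neutral u -> neutral (subst_m k v u).
Proof.
  induction u; simpl; intros k v H; auto.
  destruct (Nat.eqb n k); simpl; auto.
Qed.

Lemma var_subst_l : forall n k j m, n < S m -> k <= m -> j < m ->
  exists j', subst_l k (Var j) (Var n) = Var j' /\ j' < m.
Proof.
  intros n k j m H1 H2 H3; simpl.
  destruct (Nat.eqb_spec n k); [exists j | destruct (Nat.ltb_spec k n);
    [exists (pred n) | exists n]]; split; auto; lia.
Qed.

Lemma VAn_subst_l : forall u k j m, VAn (S m) u -> k <= m -> j < m ->
  VAn m (subst_l k (Var j) u).
Proof.
  induction u; intros k j m H Hk Hj; simpl in *; auto.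
  - destruct (Nat.eqb n k); [|destruct (Nat.ltb k n)]; simpl; auto.
  - apply IHu; auto; lia.
  - destruct H as [H1 [H2 H3]]. repeat split; auto.
    destruct H3 as [[j0 [-> Hj0]] | H3].
    + left. apply var_subst_l; auto.
    + right. apply neutral_subst_l; auto.
Qed.

Lemma VAn_subst_m : forall u k j m, VAn m u -> j < m ->
  VAn m (subst_m k (Var j) u).
Proof.
  induction u; intros k j m H Hj; simpl in *; auto.
  - apply IHu; auto; lia.
  - destruct H as [H1 [H2 H3]]. repeat split; auto.
    destruct H3 as [[j0 [-> Hj0]] | H3].
    + left. exists j0; simpl; auto.
    + right. apply neutral_subst_m; auto.
  - destruct (Nat.eqb n k); simpl; auto.
    repeat split; auto. left; exists j; auto.
Qed.

Lemma neutral_step : forall u u', step u u' -> neutral u -> neutral u'.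
Proof. induction 1; simpl; intros; try contradiction; auto. Qed.

Lemma VAn_step : forall s s', step s s' -> forall n, VAn n s -> VAn n s'.
Proof.
  induction 1; intros n HV; simpl in *.
  - destruct HV as [H1 [H2 [[j [-> Hj]] | []]]].
    apply VAn_subst_l; auto; lia.
  - destruct HV as [H1 [H2 [[j [-> Hj]] | []]]].
    simpl. apply VAn_subst_m; auto.
  - eauto.
  - destruct HV as [H1 [H2 H3]]. repeat split; auto.
    destruct H3; [left|right]; auto. eapply neutral_step; eauto.
  - destruct HV as [H1 [H2 H3]]. repeat split; auto.
    destruct H3 as [[j [-> Hj]] | H3]; [inversion H|right; auto].
  - eauto.
  - eauto.
Qed.

Lemma rev_subst_m : forall u k j G D1 D2 T Sx C, length D1 = k ->
  nth_error G j = Some C ->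
  typ G (D1 ++ T :: D2) (subst_m k (Var j) u) Sx ->
  typ G (D1 ++ Arr C T :: D2) u Sx.
Proof.
  induction u; intros k j G D1 D2 T Sx C Hl Hj H; subst k; simpl in H.
  - inversion H; subst. constructor; auto.
  - inversion H; subst. constructor.
    apply (IHu (length D1) (S j) (A :: G) D1 D2 T B C); auto.
  - inversion H; subst. econstructor; eauto.
  - inversion H; subst. constructor.
    apply (IHu (S (length D1)) j G (Sx :: D1) D2 T Bot C); simpl; auto.
  - destruct (Nat.eqb_spec n (length D1)).
    + rewrite e in *. inversion H; subst.
      rewrite nth_error_app2 in H4 by lia.
      replace (length D1 - length D1) with 0 in H4 by lia.
      simpl in H4. inversion H4; subst.
      match goal with HH : typ _ _ (App _ _) _ |- _ => inversion HH; subst end.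
      match goal with HH : typ _ _ (Var j) _ |- _ => inversion HH; subst end.
      match goal with HH : nth_error G j = Some _ |- _ => rewrite Hj in HH; inversion HH; subst end.
      econstructor.
      * rewrite nth_error_app2 by lia.
        replace (length D1 - length D1) with 0 by lia. reflexivity.
      * eapply IHu; eauto.
    + inversion H; subst. econstructor.
      * destruct (Nat.lt_ge_cases n (length D1)).
        -- rewrite nth_error_app1 in * by lia. eauto.
        -- rewrite nth_error_app2 in * by lia.
           destruct (n - length D1) eqn:E; [lia|]. simpl in *. eauto.
      * eapply IHu; eauto.
Qed.

Lemma rev_subst_l : forall u k j G1 G2 D Sx C, length G1 = k ->
  nth_error (G1 ++ G2) j = Some C ->
  typ (G1 ++ G2) D (subst_l k (Var j) u) Sx ->
  typ (G1 ++ C :: G2) D u Sx.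
Proof.
  induction u; intros k j G1 G2 D Sx C Hl Hj H; subst k; simpl in H.
  - constructor. destruct (Nat.eqb_spec n (length G1)).
    + subst n. inversion H; subst. rewrite Hj in H3; inversion H3; subst.
      rewrite nth_error_app2 by lia.
      replace (length G1 - length G1) with 0 by lia. reflexivity.
    + destruct (Nat.ltb_spec (length G1) n); inversion H; subst.
      * rewrite nth_error_app2 in H4 by lia. rewrite nth_error_app2 by lia.
        destruct (n - length G1) eqn:E; [lia|]. simpl.
        replace n1 with (pred n - length G1) by lia. auto.
      * rewrite nth_error_app1 in H4 by lia. rewrite nth_error_app1 by lia. auto.
  - inversion H; subst. constructor.
    apply (IHu (S (length G1)) (S j) (A :: G1) G2 D B C); simpl; auto.
  - inversion H; subst. econstructor; eauto.
  - inversion H; subst. constructor. eapply IHu; eauto.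
  - inversion H; subst. econstructor; eauto.
Qed.

Lemma strengthen : forall t k G1 G2 D A T, length G1 = k ->
  typ (G1 ++ A :: G2) D (lift_l k t) T -> typ (G1 ++ G2) D t T.
Proof.
  induction t; intros k G1 G2 D A T Hl H; subst k; simpl in H.
  - constructor. destruct (Nat.leb_spec (length G1) n); inversion H; subst.
    + rewrite nth_error_app2 in H4 by lia. rewrite nth_error_app2 by lia.
      replace (S n - length G1) with (S (n - length G1)) in H4 by lia. auto.
    + rewrite nth_error_app1 in H4 by lia. rewrite nth_error_app1 by lia. auto.
  - inversion H; subst. constructor.
    apply (IHt (S (length G1)) (A0 :: G1) G2 D A B); simpl; auto.
  - inversion H; subst. econstructor; eauto.
  - inversion H; subst. constructor. eapply IHt; eauto.
  - inversion H; subst. econstructor; eauto.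
Qed.

Lemma expand_step : forall s s', step s s' -> forall G D T,
  VAn (length G) s -> typ G D s' T -> typ G D s T.
Proof.
  induction 1; intros G D T HV Ht; simpl in HV.
  - destruct HV as [H1 [H2 [[j [-> Hj]] | []]]].
    apply nth_error_Some in Hj. destruct (nth_error G j) as [C|] eqn:E; [|congruence].
    econstructor; [constructor|constructor; eauto].
    apply (rev_subst_l u 0 j [] G D T C); auto.
  - destruct HV as [H1 [H2 [[j [-> Hj]] | []]]].
    apply nth_error_Some in Hj. destruct (nth_error G j) as [C|] eqn:E; [|congruence].
    inversion Ht; subst.
    econstructor; [constructor|constructor; eauto].
    apply (rev_subst_m u 0 j G [] D T Bot C); auto.
  - inversion Ht; subst. constructor. apply IHstep; auto.
  - destruct HV as [H1 [H2 H3]]. inversion Ht; subst. econstructor; eauto.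
  - destruct HV as [H1 [H2 H3]]. inversion Ht; subst. econstructor; eauto.
  - inversion Ht; subst. constructor. apply IHstep; auto.
  - inversion Ht; subst. econstructor; eauto.
Qed.

Lemma expand_red : forall s tau, red s tau -> forall n, VAn n s ->
  VAn n tau /\ (forall G D T, length G = n -> typ G D tau T -> typ G D s T).
Proof.
  induction 1; intros n HV.
  - split. eapply VAn_step; eauto.
    intros G D T Hl Ht. subst n. eapply expand_step; eauto.
  - split; auto.
  - destruct (IHclos_refl_trans1 n HV) as [V1 T1].
    destruct (IHclos_refl_trans2 n V1) as [V2 T2].
    split; auto.
Qed.

Theorem mainTheorem14 (t tau : term) (G D : list ty) (A B : ty) :
  normal t -> normal tau ->
  red (App (lift_l 0 t) (Var 0)) tau ->
  typ (A :: G) D tau B ->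
  typ G D t (Arr A B).
Proof.
  intros Ht _ Hr Hty.
  destruct (expand_red _ _ Hr (S (length G))) as [_ E].
  - simpl. repeat split.
    + apply normal_VAn, normal_lift; auto.
    + left. exists 0; split; auto; lia.
  - specialize (E (A :: G) D B eq_refl Hty).
    inversion E; subst.
    match goal with HH : typ _ _ (Var 0) _ |- _ => inversion HH; subst end.
    match goal with HH : nth_error (A :: G) 0 = Some _ |- _ => simpl in HH; inversion HH; subst end.
    eapply (strengthen t 0 [] G D); eauto.
Qed.
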